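(* For any integer $n \geq 1$, define the $n$-qubit state \[ \ket{\psi_n} := \sum_{1 \leq i \leq 2^n - 1} \frac{1}{\sqrt{n}\,\sqrt{2^{\lfloor \log_2 i \rfloor}}} \ket{i}. \] Then for every nonempty subset $S \subseteq [2^n]$ we have $\langle \psi_n | S \rangle \leq \dfrac{2+\sqrt{2}}{\sqrt{n}}$.
   Context: The computational basis of $n$ qubits is indexed by $[2^n] = \{1,\dots,2^n\}$, written $\ket{i}$. For a nonempty subset $S \subseteq [2^n]$, the subset state is $\ket{S} := \frac{1}{\sqrt{|S|}} \sum_{i \in S} \ket{i}$. *)

(* Defs.v *)
From HB Require Import structures.
From mathcomp Require Import all_boot all_order all_algebra.
From mathcomp Require Import reals.
Set Implicit Arguments. Unset Strict Implicit. Unset Printing Implicit Defensive.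
Import Order.TTheory GRing.Theory Num.Theory.
Local Open Scope ring_scope.

(* Computational basis [2^n] = {1,...,2^n}: the element i : 'I_(2^n)
   represents the basis index i.+1 (so i.+1 ranges over 1..2^n). *)

Definition psi_amp (R : realType) (n : nat) (i : 'I_(2 ^ n)) : R :=
  if (i.+1 <= 2 ^ n - 1)%N then
    1 / (Num.sqrt (n%:R) * Num.sqrt ((2 ^ trunc_log 2 i.+1)%N%:R))
  else 0.

Definition subset_amp (R : realType) (n : nat) (S : {set 'I_(2 ^ n)})
  (i : 'I_(2 ^ n)) : R :=
  if i \in S then 1 / Num.sqrt (#|S|%:R) else 0.

Definition inner (R : realType) (n : nat) (u v : 'I_(2 ^ n) -> R) : R :=
  \sum_(i : 'I_(2 ^ n)) u i * v i.

(* Main.v *)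
Require Import Defs.
From HB Require Import structures.
From mathcomp Require Import all_boot all_order all_algebra.
From mathcomp Require Import reals.
From mathcomp Require Import lra.
Import Order.TTheory GRing.Theory Num.Theory.
Local Open Scope ring_scope.

Lemma sorted_sum_le (R : realDomainType) (f : nat -> R)
  (hf : forall a b, (a <= b)%N -> f b <= f a) :
  forall (s : seq nat) a, sorted ltn s -> all (fun x => a <= x)%N s ->
  \sum_(x <- s) f x <= \sum_(t <- iota a (size s)) f t.
Proof.
elim=> [|x s IH] a /= hs ha; first by rewrite !big_nil.
rewrite !big_cons; move/andP: ha => [hax has].
apply: lerD; first exact: hf.
apply: IH; first exact: (path_sorted hs).
have := order_path_min ltn_trans hs.
move/allP=> H; apply/allP=> y ys; have := H y ys => /= hy.
by apply: leq_ltn_trans hax hy.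
Qed.

Lemma set_sum_le (R : realDomainType) (N : nat) (S : {set 'I_N}) (f : nat -> R)
  (hf : forall a b, (a <= b)%N -> f b <= f a) :
  \sum_(i in S) f (val i) <= \sum_(t < #|S|) f t.
Proof.
rewrite -big_enum -(big_map val xpredT f).
rewrite -(perm_big _ (permEl (perm_sort leq [seq val i | i <- enum S]))).
have hu : uniq [seq val i | i <- enum S] by rewrite map_inj_uniq ?enum_uniq //; exact: val_inj.
have := @sorted_sum_le R f hf (sort leq [seq val i | i <- enum S]) 0.
rewrite size_sort size_map -cardE => H.
rewrite -(big_mkord xpredT f) /index_iota subn0.
apply: H; last by apply/allP.
rewrite ltn_sorted_uniq_leq sort_uniq hu /=.
apply: sort_sorted; exact: leq_total.
Qed.

Lemma sqrt_sum_le (R : rcfType) (m : nat) :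
  \sum_(t < m) 1 / Num.sqrt (t.+1%:R : R) <= 2 * Num.sqrt (m%:R).
Proof.
elim: m => [|m IH]; first by rewrite big_ord0 sqrtr0 mulr0.
rewrite big_ord_recr /=.
set a := Num.sqrt (m%:R : R); set b := Num.sqrt (m.+1%:R : R).
have ha : 0 <= a by apply: sqrtr_ge0.
have hb : 0 < b by rewrite sqrtr_gt0 ltr0n.
have ha2 : a ^+ 2 = m%:R by rewrite sqr_sqrtr ?ler0n.
have hb2 : b ^+ 2 = m%:R + 1 by rewrite sqr_sqrtr ?ler0n // -natr1.
suff : 2 * a + 1 / b <= 2 * b by move=> H; apply: le_trans H; rewrite lerD2r.
have h : 1 / b <= 2 * b - 2 * a by rewrite ler_pdivrMr // mulrBl; nra.
lra.
Qed.
Lemma psi_le (R : realType) (n : nat) (hn : (1 <= n)%N) (i : 'I_(2 ^ n)) :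
  @psi_amp R n i <= Num.sqrt 2 / Num.sqrt (n%:R) * (1 / Num.sqrt (i.+1%:R)).
Proof.
have hA : 0 < Num.sqrt (n%:R : R) by rewrite sqrtr_gt0 ltr0n.
have hC : 0 < Num.sqrt (i.+1%:R : R) by rewrite sqrtr_gt0 ltr0n.
have hD : 0 < Num.sqrt (2 : R) by rewrite sqrtr_gt0.
rewrite /psi_amp; case: ifP => _; last first.
  by apply: mulr_ge0; apply: divr_ge0 => //; apply: ltW.
set L := trunc_log 2 i.+1.
have hB : 0 < Num.sqrt ((2 ^ L)%N%:R : R) by rewrite sqrtr_gt0 ltr0n expn_gt0.
have hk : (i.+1 <= 2 * 2 ^ L)%N by rewrite -expnS; apply: ltnW; apply: trunc_log_ltn.
have hCB : Num.sqrt (i.+1%:R : R) <= Num.sqrt 2 * Num.sqrt ((2 ^ L)%N%:R)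
  by rewrite -sqrtrM // ler_sqrt ?mulr_ge0 // -natrM ler_nat.
set A := Num.sqrt (n%:R : R) in hA *.
set B := Num.sqrt ((2 ^ L)%N%:R : R) in hB hCB *.
set C := Num.sqrt (i.+1%:R : R) in hC hCB *.
set D := Num.sqrt (2 : R) in hD hCB *.
have -> : 1 / (A * B) = (1 / A) * (1 / B) by rewrite !mul1r invfM.
have -> : D / A * (1 / C) = (1 / A) * (D / C) by rewrite !mul1r [D * _]mulrC -mulrA.
apply: ler_wpM2l; first by rewrite divr_ge0 // ltW.
rewrite ler_pdivlMr // mulrAC ler_pdivrMr // mul1r mulrC.
by rewrite mulrC.
Qed.
Theorem mainTheorem3 (R : realType) (n : nat) (hn : (1 <= n)%N)
  (S : {set 'I_(2 ^ n)}) (hS : S != set0) :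
  @inner R n (@psi_amp R n) (@subset_amp R n S) <= (2 + Num.sqrt 2) / Num.sqrt (n%:R).
Proof.
have hm : (0 < #|S|)%N by rewrite card_gt0.
have hsm : 0 < Num.sqrt (#|S|%:R : R) by rewrite sqrtr_gt0 ltr0n.
have hA : 0 < Num.sqrt (n%:R : R) by rewrite sqrtr_gt0 ltr0n.
have hD : 0 <= Num.sqrt (2 : R) by apply: sqrtr_ge0.
rewrite /inner /subset_amp.
under eq_bigr => i _ do rewrite (fun_if (fun x => @psi_amp R n i * x)) mulr0.
rewrite -big_mkcond /= -big_distrl /=.
set c := Num.sqrt 2 / Num.sqrt (n%:R : R).
have hc : 0 <= c by rewrite divr_ge0 // ltW.
have H1 : \sum_(i in S) @psi_amp R n i <= c * (2 * Num.sqrt (#|S|%:R)).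
  apply: le_trans (_ : \sum_(i in S) c * (1 / Num.sqrt ((val i).+1%:R)) <= _).
    by apply: ler_sum => i _; apply: psi_le.
  rewrite -big_distrr /=; apply: ler_wpM2l => //.
  apply: le_trans (sqrt_sum_le _ _).
  apply: (@set_sum_le R _ S (fun t => 1 / Num.sqrt (t.+1%:R : R))).
  move=> a b hab; rewrite !mul1r lef_pV2 ?posrE ?sqrtr_gt0 ?ltr0n //.
  by rewrite ler_sqrt ?ler0n // ler_nat.
apply: le_trans (_ : c * (2 * Num.sqrt (#|S|%:R)) * (1 / Num.sqrt (#|S|%:R)) <= _).
  by apply: ler_wpM2r => //; rewrite divr_ge0 // ltW.
have -> : c * (2 * Num.sqrt (#|S|%:R : R)) * (1 / Num.sqrt (#|S|%:R)) = 2 * c.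
  rewrite mul1r -mulrA -mulrA mulfV ?mulr1; first exact: mulrC.
  exact: lt0r_neq0.
rewrite /c mulrA ler_wpM2r //; first by rewrite invr_ge0 ltW.
have : Num.sqrt (2 : R) <= 2.
  have h2 : Num.sqrt (2 : R) * Num.sqrt 2 = 2 by rewrite -expr2 sqr_sqrtr.
  case: (lerP (Num.sqrt (2 : R)) 2) => // h.
  have : 2 * 2 < Num.sqrt (2 : R) * Num.sqrt 2 by apply: ltr_pM.
  lra.
lra.
Qed.
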